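(* Let $p\in(0,1)$, let $k$ be a positive integer, and let $u_1\ge u_2\ge\dots\ge u_{3k}\ge0$. Then $$\Big(\sum_{i=k+1}^{3k}u_i^2\Big)^{1/2}\le C_1(p)k^{\frac12-\frac1p}\Big(\sum_{i=1}^{2k}u_i^p\Big)^{1/p},\qquad C_1(p)=\begin{cases}(\frac p2)^{\frac12}\big(\frac{2}{2-p}\big)^{\frac12-\frac1p}, & p\in(0,p^{\star}],\\ 2^{\frac12-\frac1p}, & p\in(p^{\star},1).\end{cases}$$
   Context: $p^{\star}\approx0.45418$ is the unique solution in $(0,1]$ of $(\frac{p}{2})^{1/2}(2-p)^{\frac1p-\frac12}=1$. *)

(* Defs.v *)
(* R : realType, real powers via powR (`^),
   which satisfies 0 `^ p = 0 for p <> 0. *)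
From HB Require Import structures.
From mathcomp Require Import all_boot all_order all_algebra.
From mathcomp Require Import all_classical all_reals all_analysis.
Set Implicit Arguments. Unset Strict Implicit. Unset Printing Implicit Defensive.
Import Order.TTheory GRing.Theory Num.Theory.
Local Open Scope ring_scope.
Local Open Scope classical_set_scope.

Definition pstar_fun {R : realType} (p : R) : R :=
  (p / 2) `^ (2^-1) * (2 - p) `^ (p^-1 - 2^-1).

(* p* = the unique solution in (0,1] of pstar_fun p = 1
   (chosen by xget among the solutions; the context asserts uniqueness). *)
Definition pstar {R : realType} : R :=
  xget 0 [set p : R | 0 < p <= 1 /\ pstar_fun p = 1].

Definition C1 {R : realType} (p : R) : R :=
  if p <= pstar then (p / 2) `^ (2^-1) * (2 / (2 - p)) `^ (2^-1 - p^-1)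
  else 2 `^ (2^-1 - p^-1).

(* Main.v *)
Require Import Defs.
From HB Require Import structures.
From mathcomp Require Import all_boot all_order all_algebra.
From mathcomp Require Import all_classical all_reals all_analysis.
From mathcomp Require Import ring lra zify.
Import Order.TTheory GRing.Theory Num.Theory.
Import numFieldNormedType.Exports.
Local Open Scope ring_scope.

Section S2.
Context {R : realType}.

Implicit Types (q l x y a w : R).
Lemma conv2 q l x y : 1 <= q -> 0 <= l -> l <= 1 -> 0 <= x -> 0 <= y ->
  (l * x + (1 - l) * y) `^ q <= l * x `^ q + (1 - l) * y `^ q.
Proof.
move=> q1 l0 l1 x0 y0.
have := @convex_powR R q q1 (Itv01 l0 l1) x y.
rewrite !inE /= !in_itv /= !andbT => /(_ x0 y0).
by rewrite !convRE /=.
Qed.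

Lemma powRK a q : 0 <= a -> q != 0 -> (a `^ q^-1) `^ q = a.
Proof. by move=> a0 q0; rewrite -powRrM mulVf // powRr1. Qed.

Lemma powRVr x r : 0 < x -> (x^-1) `^ r = (x `^ r)^-1.
Proof.
move=> x0; apply: (@mulfI _ (x `^ r)); first by rewrite gt_eqF// powR_gt0.
by rewrite -powRM ?invr_ge0 ?ltW// divff ?gt_eqF// powR1 divff// gt_eqF// powR_gt0.
Qed.

Lemma powR_div x y r : 0 <= x -> 0 < y -> (x / y) `^ r = x `^ r / y `^ r.
Proof. by move=> x0 y0; rewrite powRM // ?invr_ge0 ?(ltW y0) // powRVr. Qed.

Lemma mink_key (q al w : R) : 1 <= q -> 0 <= al -> al <= 1 -> 0 <= w -> w <= 1 ->
  al + (2 - al) * w `^ q <= ((1 - w) * al `^ q^-1 + w * 2 `^ q^-1) `^ q.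
Proof.
move=> q1 al0 al1 w0 w1.
have q0 : 0 < q by apply: lt_le_trans q1.
have qn0 : q != 0 by rewrite gt_eqF.
set X := al `^ q^-1; set Z := (2:R) `^ q^-1; set Y := (2 - al) `^ q^-1.
have X0 : 0 <= X by apply: powR_ge0.
have Z0 : 0 < Z by apply: powR_gt0.
have Y0 : 0 <= Y by apply: powR_ge0.
have XE : X `^ q = al by rewrite powRK.
have ZE : Z `^ q = 2 by rewrite powRK.
have YE : Y `^ q = 2 - al by rewrite powRK // subr_ge0 (le_trans al1) // ler1n.
set P := (1 - w) * X + w * Z.
have h1 : 0 <= (1 - w) * X by rewrite mulr_ge0 // subr_ge0.
have h2 : 0 <= w * Z by rewrite mulr_ge0 // ltW.
have P0 : 0 <= P by rewrite addr_ge0.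
have [P00|Ppos] := eqVneq P 0.
  have [w00|wpos] := eqVneq w 0.
    by rewrite /P w00 powR0 // mulr0 addr0 subr0 mul1r mul0r addr0 XE.
  exfalso; move: P00 => /eqP; rewrite (paddr_eq0 h1 h2).
  by rewrite !mulf_eq0 (negbTE wpos) (gt_eqF Z0) andbF.
have Pp : 0 < P by rewrite lt_neqAle eq_sym Ppos P0.
set l := (1 - w) * X / P.
have l0 : 0 <= l by rewrite divr_ge0 // mulr_ge0 // subr_ge0.
have l1 : l <= 1.
  by rewrite ler_pdivrMr // mul1r /P lerDl mulr_ge0 // ltW.
have ml : 1 - l = w * Z / P.
  by rewrite /l -{1}(divff Ppos) -mulrBl {1}/P (addrC ((1 - w) * X)) addrK.
have c1 := conv2 q l 1 (X / Z) q1 l0 l1 ler01 (divr_ge0 X0 (ltW Z0)).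
have hl0 : 0 <= 1 - l by rewrite subr_ge0.
have hl1 : 1 - l <= 1 by rewrite lerBlDl lerDr.
have c2 := conv2 q (1 - l) (Y / Z) 0 q1 hl0 hl1 (divr_ge0 Y0 (ltW Z0)) (lexx 0).
have e1 : l * 1 + (1 - l) * (X / Z) = X / P.
  by rewrite ml /l; field; rewrite Ppos (gt_eqF Z0).
have e2 : (1 - l) * (Y / Z) + (1 - (1 - l)) * 0 = w * Y / P.
  by rewrite ml mulr0 addr0; field; rewrite Ppos (gt_eqF Z0).
rewrite e1 powR1 mulr1 powR_div // powR_div // ?XE ?ZE in c1.
rewrite e2 powR0 // mulr0 addr0 powR_div // ?mulr_ge0 // powR_div // ?YE ?ZE in c2.
rewrite powRM // YE in c2.
have PQ : 0 < P `^ q by apply: powR_gt0.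
rewrite -subr_ge0.
have := lerD c1 c2.
set LL := (_ + _); set RR := (_ + _).
have -> : RR = 1 by rewrite /RR; field.
have -> : LL = (al + (2 - al) * w `^ q) / P `^ q.
  rewrite /LL; field; rewrite powR_eq0; apply/negP => /andP [/eqP h _]; move: Pp; by rewrite h ltxx.
rewrite ler_pdivrMr // mul1r => H.
by rewrite subr_ge0.
Qed.


Lemma amgm (l al : R) : 0 < l -> l < 1 -> 0 <= al ->
  al `^ l <= l `^ l * (1 - l) `^ (1 - l) * (1 + al).
Proof.
move=> l0 l1 al0.
have ml0 : 0 < 1 - l by rewrite subr_gt0.
have := @conjugate_powR R ((al / l) `^ l) (((1 - l)^-1) `^ (1 - l)) (l^-1) ((1 - l)^-1)
  (powR_ge0 _ _) (powR_ge0 _ _) (ltac:(by rewrite invr_gt0)) (ltac:(by rewrite invr_gt0)).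
rewrite !invrK subrKC => /(_ erefl).
rewrite -!powRrM !mulfV ?gt_eqF //.
rewrite powRr1; last by rewrite divr_ge0 // ltW.
rewrite powRr1; last by rewrite invr_ge0 ltW.
rewrite mulfVK ?gt_eqF // mulVf ?gt_eqF // => H.
have := ler_wpM2l (mulr_ge0 (powR_ge0 l l) (powR_ge0 (1 - l) (1 - l))) H.
rewrite [X in X <= _ -> _](_ : _ = (al / l * l) `^ l * ((1 - l)^-1 * (1 - l)) `^ (1 - l)).
  by rewrite mulfVK ?gt_eqF // mulVf ?gt_eqF // powR1 mulr1 (addrC al).
rewrite (@powRM R (al / l) l l (divr_ge0 al0 (ltW l0)) (ltW l0)).
rewrite (@powRM R (1 - l)^-1 (1 - l) (1 - l)) ?invr_ge0 ?(ltW ml0) //.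
by rewrite mulrACA (mulrC (l `^ l)) (mulrC ((1 - l) `^ (1 - l))).
Qed.

Definition E (x : R) := x * ln x.

Lemma tang (z m : R) : 0 < z -> 0 < m -> z - m <= z * ln z - z * ln m.
Proof.
move=> z0 m0.
have h : ln (m / z) <= m / z - 1.
  have := @le_ln1Dx R (m / z - 1).
  rewrite subrKC; apply; rewrite ltrBrDl subrr divr_gt0 //.
rewrite ln_div ?posrE // in h.
have := ler_wpM2l (ltW z0) h.
rewrite mulrBr mulrBr mulr1 mulrCA divff ?gt_eqF // mulr1.
move=> h2; lra.
Qed.

Lemma E_convex (x y l : R) : 0 < x -> 0 < y -> 0 <= l -> l <= 1 ->
  E (l * x + (1 - l) * y) <= l * E x + (1 - l) * E y.
Proof.
move=> x0 y0 l0 l1.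
set m := l * x + (1 - l) * y.
have m0 : 0 < m.
  have [l00|lp] := eqVneq l 0; first by rewrite /m l00 mul0r add0r subr0 mul1r.
  have h1 : 0 < l * x by rewrite mulr_gt0 // lt_neqAle eq_sym lp.
  have h2 : 0 <= (1 - l) * y by rewrite mulr_ge0 // ?subr_ge0 // ltW.
  rewrite /m; lra.
have ml0 : 0 <= 1 - l by rewrite subr_ge0.
have t1 := ler_wpM2l l0 (@tang x m x0 m0).
have t2 := ler_wpM2l ml0 (@tang y m y0 m0).
have e : E m = l * (x * ln m) + (1 - l) * (y * ln m) by rewrite /E /m; ring.
rewrite e /E.
have : l * (x - m) + (1 - l) * (y - m) = 0 by rewrite /m; ring.
move: t1 t2; rewrite !mulrBr; lra.
Qed.

Lemma E_incr (a b d : R) : 0 < a -> a <= b -> 0 <= d -> E (a + d) + E b <= E a + E (b + d).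
Proof.
move=> a0 ab d0.
have [->|dp] := eqVneq d 0; first by rewrite !addr0 addrC.
have dpos : 0 < d by rewrite lt_neqAle eq_sym dp.
set D := b + d - a.
have D0 : 0 < D by rewrite /D; lra.
set l := d / D.
have l0 : 0 <= l by rewrite divr_ge0 // ltW.
have l1 : l <= 1 by rewrite ler_pdivrMr // mul1r /D; lra.
have b0 : 0 < b + d by lra.
have c1 := @E_convex a (b + d) l a0 b0 l0 l1.
have ml0 : 0 <= 1 - l by rewrite subr_ge0.
have ml1 : 1 - l <= 1 by rewrite lerBlDl lerDr.
have c2 := @E_convex a (b + d) (1 - l) a0 b0 ml0 ml1.
have e1 : l * a + (1 - l) * (b + d) = b.
  rewrite /l /D; field; rewrite gt_eqF //; lra.
have e2 : (1 - l) * a + (1 - (1 - l)) * (b + d) = a + d.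
  rewrite /l /D; field; rewrite gt_eqF //; lra.
rewrite e1 in c1; rewrite e2 in c2.
move: c1 c2; lra.
Qed.

Definition H (s : R) := E (2 * s - 1) / 2 - E s.

Lemma H_mono (s s' : R) : 1 <= s -> s <= s' -> H s <= H s'.
Proof.
move=> s1 ss.
have s0 : 0 < s by lra.
have i1 := @E_incr s (2 * s - 1) (s' - s) s0 ltac:(lra) ltac:(lra).
have i2 := @E_incr s (2 * s - 1 + (s' - s)) (s' - s) s0 ltac:(lra) ltac:(lra).
have e1 : s + (s' - s) = s' by ring.
rewrite e1 in i1 i2.
have e2 : 2 * s - 1 + (s' - s) + (s' - s) = 2 * s' - 1 by ring.
rewrite e2 in i2.
rewrite /H; lra.
Qed.

Lemma lnf (p : R) : 0 < p -> p <= 1 -> ln (pstar_fun p) = H (p^-1) - ln 2 / 2.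
Proof.
move=> p0 p1.
have q0 : 0 < 2 * p^-1 - 1.
  have : 1 <= p^-1 by rewrite invf_ge1.
  lra.
rewrite /pstar_fun lnM ?posrE ?powR_gt0 ?divr_gt0 //; last by lra.
rewrite !ln_powR ln_div ?posrE //.
have e : 2 - p = p * (2 * p^-1 - 1) by field; rewrite gt_eqF.
rewrite e lnM ?posrE // /H /E lnV ?posrE //.
set L := ln (2 / p - 1); set lp := ln p; set l2 := ln 2; field; exact: lt0r_neq0.
Qed.

Lemma pf_gt0 (p : R) : 0 < p -> p < 2 -> 0 < pstar_fun p.
Proof.
move=> p0 p2; rewrite /pstar_fun mulr_gt0 // powR_gt0 //; first by rewrite divr_gt0.
by rewrite subr_gt0.
Qed.

Lemma f_anti (p1 p2 : R) : 0 < p1 -> p1 <= p2 -> p2 <= 1 -> pstar_fun p2 <= pstar_fun p1.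
Proof.
move=> p10 p12 p21.
have p20 : 0 < p2 by apply: lt_le_trans p12.
rewrite -ler_ln ?posrE ?pf_gt0 //; try lra.
rewrite !lnf //; last by lra.
rewrite lerD2r; apply: H_mono; first by rewrite invf_ge1.
by rewrite lef_pV2 ?posrE.
Qed.

Lemma E_cont (x : R) : 0 < x -> {for x, continuous (E : R -> R)}.
Proof.
move=> x0; apply: continuousM; first exact: cvg_id.
exact: continuous_ln.
Qed.

Lemma H_cont (x : R) : 1 <= x -> {for x, continuous (H : R -> R)}.
Proof.
move=> x1.
apply: continuousB; last by apply: E_cont; lra.
apply: continuousM; last exact: cvg_cst.
have h1 : {for x, continuous (fun s : R => 2 * s - 1)}.
  apply: continuousB; last exact: cvg_cst.
  apply: continuousM; first exact: cvg_cst.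
  exact: cvg_id.
have h2 : {for (2 * x - 1), continuous (E : R -> R)} by apply: E_cont; lra.
exact: (continuous_comp h1 h2).
Qed.

Lemma H1 : H 1 = 0.
Proof. by rewrite /H /E mulr1 (_ : 2 - 1 = 1 :> R) ?ln1 ?mulr0 ?mul0r ?subr0 //; lra. Qed.

Lemma H3 : ln 2 / 2 <= H 3.
Proof.
have e : (2 : R) * 3 - 1 = 5 by lra.
rewrite /H /E e.
have e1 : (3 : R) ^+ 6 * 2 = 1458 by ring.
have e2 : (5 : R) ^+ 5 = 3125 by ring.
have h : ln ((3 : R) ^+ 6 * 2) <= ln ((5 : R) ^+ 5).
  rewrite e1 e2 ler_ln; [lra | rewrite posrE; lra | rewrite posrE; lra].
rewrite lnM in h; last 2 first.
- by rewrite posrE; apply: exprn_gt0; lra.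
- by rewrite posrE; lra.
rewrite (@lnXn R 6 3) in h; last lra.
rewrite (@lnXn R 5 5) in h; last lra.
rewrite -[ln (R:=R) 3 *+ 6]mulr_natr -[ln (R:=R) 5 *+ 5]mulr_natr in h.
lra.
Qed.
Lemma exists_root : exists p0 : R, 0 < p0 <= 1 /\ pstar_fun p0 = 1.
Proof.
have l2 : 0 <= ln (2 : R) by apply: ln_ge0; lra.
have hI : exists2 c : R, c \in `[1, 3] & H c = ln 2 / 2.
  apply: IVT; first lra.
  apply: continuous_in_subspaceT => x.
  rewrite inE /= in_itv /= => /andP [x1 _].
  exact: H_cont.
  by rewrite ge_min le_max H1 H3 orbT /=; apply/orP; left; lra.
case: hI => c.
rewrite in_itv /= => /andP [c1 c3] Hc.
have c0 : 0 < c by lra.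
have ci0 : 0 < c^-1 by rewrite invr_gt0.
have ci1 : c^-1 <= 1 by rewrite invf_le1.
exists c^-1; split; first by rewrite ci0 ci1.
apply/eqP; rewrite -ln_eq0; last by apply: pf_gt0 => //; lra.
rewrite lnf // invrK Hc; apply/eqP; lra.
Qed.

Lemma pstar_spec : 0 < (pstar : R) <= 1 /\ pstar_fun (pstar : R) = 1.
Proof. exact: (@xgetPex R 0 [set p : R | 0 < p <= 1 /\ pstar_fun p = 1] exists_root). Qed.


Definition Ac (p : R) := (p / 2) `^ (2^-1) * (2 / (2 - p)) `^ (2^-1 - p^-1).
Definition Bc (p : R) := (2 : R) `^ (2^-1 - p^-1).

Lemma A_eq (p : R) : 0 < p -> p < 1 -> Ac p = Bc p * pstar_fun p.
Proof.
move=> p0 p1.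
have p2 : 0 < 2 - p by lra.
rewrite /Ac /Bc /pstar_fun (@powRM R 2 (2 - p)^-1); last 2 first.
- lra.
- by rewrite invr_ge0 ltW.
rewrite powRVr // -powRN opprB.
by rewrite mulrCA mulrA.
Qed.

Lemma C1_ge (p : R) : 0 < p -> p < 1 -> Ac p <= C1 p /\ Bc p <= C1 p.
Proof.
move=> p0 p1.
have [/andP [ps0 ps1] ps] := (pstar_spec : 0 < (pstar : R) <= 1 /\ pstar_fun (pstar : R) = 1).
have B0 : 0 <= Bc p by apply: powR_ge0.
rewrite /C1 -/(Ac p) -/(Bc p); case: ifP => h.
  split => //; rewrite A_eq // ler_peMr //.
  by rewrite -ps; apply: f_anti.
split => //; rewrite A_eq // ler_piMr //.
rewrite -ps; apply: f_anti => //; last by lra.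
by move/negbT: h; rewrite -ltNge => /ltW.
Qed.

Lemma Ac_pow (p : R) : 0 < p -> p < 1 ->
  Ac p `^ p = (p / 2) `^ (p / 2) * (1 - p / 2) `^ (1 - p / 2).
Proof.
move=> p0 p1.
have p2 : 0 < 2 - p by lra.
rewrite /Ac powRM; last 2 first.
- by apply: powR_ge0.
- by apply: powR_ge0.
rewrite -!powRrM.
have e1 : 2 / (2 - p) = (1 - p / 2)^-1.
  by field; rewrite gt_eqF.
have e2 : (2^-1 - p^-1) * p = - (1 - p / 2) by field; rewrite gt_eqF.
have e3 : 2^-1 * p = p / 2 by rewrite mulrC.
rewrite e1 e2 e3 powRVr; last by lra.
by rewrite powRN invrK mulrC.
Qed.

Lemma Bc_pow (p : R) : 0 < p -> 2 * Bc p `^ p = 2 `^ (p / 2).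
Proof.
move=> p0.
rewrite /Bc -powRrM.
have e : (2^-1 - p^-1) * p = p / 2 - 1 by field; rewrite gt_eqF.
rewrite e powRB; last by apply/implyP => _; lra.
rewrite powRr1; last lra.
by field.
Qed.

Lemma powR_le (r x y : R) : 0 <= r -> 0 <= x -> x <= y -> x `^ r <= y `^ r.
Proof.
move=> r0 x0 xy; apply: (ge0_ler_powR r0) => //; rewrite nnegrE //.
exact: le_trans xy.
Qed.

Lemma key (p al w C : R) : 0 < p -> p < 1 -> 0 <= al -> al <= 1 -> 0 <= w -> w <= 1 ->
  0 <= C -> Ac p <= C -> Bc p <= C ->
  al + (2 - al) * w `^ (2 / p) <= C ^+ 2 * (1 + w + (1 - w) * al) `^ (2 / p).
Proof.
move=> p0 p1 al0 al1 w0 w1 C0 hA hB.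
have q1 : 1 <= 2 / p by rewrite ler_pdivlMr // mul1r; lra.
have qi : (2 / p)^-1 = p / 2 by rewrite invf_div.
have mk := @mink_key (2 / p) al w q1 al0 al1 w0 w1.
rewrite qi in mk.
have Cp0 : 0 <= C `^ p by apply: powR_ge0.
have A0 : 0 <= Ac p by rewrite /Ac mulr_ge0 // powR_ge0.
have B0 : 0 <= Bc p by apply: powR_ge0.
have KA : al `^ (p / 2) <= C `^ p * (1 + al).
  apply: le_trans (@amgm (p / 2) al ltac:(lra) ltac:(lra) al0) _.
  rewrite -Ac_pow // ler_wpM2r //; first lra.
  by apply: powR_le => //; exact: ltW.
have KB : (2 : R) `^ (p / 2) <= C `^ p * 2.
  rewrite -Bc_pow // [X in _ <= X]mulrC ler_wpM2l //.
  by apply: powR_le => //; exact: ltW.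
apply: (le_trans mk).
have T0 : 0 <= 1 + w + (1 - w) * al by rewrite addr_ge0 ?mulr_ge0 //; lra.
have step : (1 - w) * al `^ (p / 2) + w * 2 `^ (p / 2) <= C `^ p * (1 + w + (1 - w) * al).
  have h1 := ler_wpM2l (ltac:(lra) : 0 <= 1 - w) KA.
  have h2 := ler_wpM2l w0 KB.
  have := lerD h1 h2.
  set X := C `^ p.
  have -> : (1 - w) * (X * (1 + al)) + w * (X * 2) = X * (1 + w + (1 - w) * al) by ring.
  by [].
apply: (le_trans (@powR_le (2 / p) _ _ _ _ step)); first lra.
  by rewrite addr_ge0 // mulr_ge0 ?powR_ge0 //; lra.
rewrite powRM // -powRrM (mulrC p) divfK ?gt_eqF //.
by rewrite powR_mulrn.
Qed.

Lemma chord (q a b z : R) : 1 <= q -> 0 <= a -> a <= z -> z <= b ->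
  (b - a) * z `^ q <= (b - a) * a `^ q + (b `^ q - a `^ q) * (z - a).
Proof.
move=> q1 a0 az zb.
have [ab|] := eqVneq a b.
  have za : z = a by apply/eqP; rewrite eq_le az andbT ab.
  by rewrite za ab !subrr !mul0r ?mulr0 ?addr0.
move=> nab.
have abp : 0 < b - a by rewrite subr_gt0 lt_neqAle nab (le_trans az zb).
set l := (b - z) / (b - a).
have l0 : 0 <= l by rewrite /l; apply: divr_ge0; [rewrite subr_ge0 | exact: ltW].
have l1 : l <= 1 by rewrite /l ler_pdivrMr // mul1r; lra.
have b0 : 0 <= b by lra.
have := @conv2 q l a b q1 l0 l1 a0 b0.
have -> : l * a + (1 - l) * b = z by rewrite /l; field; rewrite gt_eqF.
move=> h; have := ler_wpM2l (ltW abp) h.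
have -> : (b - a) * (l * a `^ q + (1 - l) * b `^ q) =
  (b - a) * a `^ q + (b `^ q - a `^ q) * (z - a) by rewrite /l; field; rewrite gt_eqF.
by [].
Qed.

Lemma powpq (p x : R) : 0 < p -> 0 <= x -> (x `^ p) `^ (2 / p) = x ^+ 2.
Proof.
move=> p0 x0; rewrite -powRrM (mulrC p) divfK ?gt_eqF //.
by rewrite (_ : (2 : R) = 2%:R) // powR_mulrn.
Qed.

Lemma final_scalar (p k M c Q T3 sg S1 C : R) :
  0 < p -> p < 1 -> 1 <= k -> 0 < M -> 0 <= c -> c <= M ->
  0 <= C -> Ac p <= C -> Bc p <= C ->
  T3 <= k * c ^+ 2 ->
  k * M `^ p <= S1 ->
  k * c `^ p <= sg -> sg <= k * M `^ p ->
  (M `^ p - c `^ p) * Q <= k * ((M `^ p - c `^ p) * c ^+ 2)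
     + (M ^+ 2 - c ^+ 2) * (sg - k * c `^ p) ->
  Q <= k * M ^+ 2 ->
  Q + T3 <= C ^+ 2 * k `^ (1 - 2 / p) * (S1 + sg) `^ (2 / p).
Proof.
move=> p0 p1 k1 M0 c0 cM C0 hA hB hT3 hS1 hsg1 hsg2 hch hQ.
have k0 : 0 < k by lra.
set a := c `^ p; set b := M `^ p.
have b0 : 0 < b by apply: powR_gt0.
have a0 : 0 <= a by apply: powR_ge0.
have ab : a <= b by apply: powR_le => //; exact: ltW.
have hM2 : b `^ (2 / p) = M ^+ 2 by apply: powpq => //; exact: ltW.
have hc2 : a `^ (2 / p) = c ^+ 2 by apply: powpq.
set w := a / b.
have w0 : 0 <= w by rewrite /w divr_ge0 // ltW.
have w1 : w <= 1 by rewrite /w ler_pdivrMr // mul1r.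
have hg : w `^ (2 / p) = c ^+ 2 / M ^+ 2 by rewrite /w powR_div // hM2 hc2.
have M2 : 0 < M ^+ 2 by apply: exprn_gt0.
have [al [al0 al1 H1 H2]] : exists al, [/\ 0 <= al, al <= 1,
    Q + k * c ^+ 2 <= k * M ^+ 2 * (al + (2 - al) * w `^ (2 / p)) &
    k * b * (1 + w + (1 - w) * al) <= k * b + sg].
  rewrite hg.
  have [eab|nab] := eqVneq a b.
    exists 1; split => //.
    - have -> : k * M ^+ 2 * (1 + (2 - 1) * (c ^+ 2 / M ^+ 2)) = k * M ^+ 2 + k * c ^+ 2.
        by field; rewrite gt_eqF.
      by rewrite lerD2r.
    - rewrite /w eab divff ?gt_eqF // subrr mul0r addr0.
      rewrite mulrDr mulr1 lerD2l -{1}eab; exact: hsg1.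
  have abp : 0 < b - a by rewrite subr_gt0 lt_neqAle nab ab.
  exists ((sg / k - a) / (b - a)); split.
  - apply: divr_ge0; last exact: ltW.
    by rewrite subr_ge0 ler_pdivlMr // mulrC.
  - by rewrite ler_pdivrMr // mul1r lerD2r ler_pdivrMr // mulrC.
  - have e : (b - a) * (k * c ^+ 2 + (M ^+ 2 - c ^+ 2) * (sg - k * a) / (b - a)) =
        k * ((b - a) * c ^+ 2) + (M ^+ 2 - c ^+ 2) * (sg - k * a).
      by field; rewrite gt_eqF.
    have hQ' : Q <= k * c ^+ 2 + (M ^+ 2 - c ^+ 2) * (sg - k * a) / (b - a).
      by rewrite -(ler_pM2l abp) e.
    have -> : k * M ^+ 2 * ((sg / k - a) / (b - a) + (2 - (sg / k - a) / (b - a)) *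
        (c ^+ 2 / M ^+ 2)) = k * c ^+ 2 + (k * c ^+ 2 + (M ^+ 2 - c ^+ 2) * (sg - k * a) / (b - a)).
      field; rewrite !gt_eqF //.
    by rewrite addrC lerD2l.
  - have -> : k * b * (1 + w + (1 - w) * ((sg / k - a) / (b - a))) = k * b + sg.
      rewrite /w; field; rewrite !gt_eqF //.
    by [].
have K := @key p al w C p0 p1 al0 al1 w0 w1 C0 hA hB.
set T := 1 + w + (1 - w) * al in H2 K.
have T0 : 0 <= T by rewrite /T !addr_ge0 // mulr_ge0 // subr_ge0.
have kb0 : 0 < k * b by rewrite mulr_gt0.
have Sp : 0 <= S1 + sg.
  apply: addr_ge0; first exact: le_trans (ltW kb0) hS1.
  apply: le_trans hsg1; exact: mulr_ge0 (ltW k0) a0.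
have hT : T <= (S1 + sg) / (k * b).
  rewrite ler_pdivlMr // mulrC; apply: (le_trans H2); rewrite lerD2r; exact: hS1.
have Tq : T `^ (2 / p) <= (S1 + sg) `^ (2 / p) / (k `^ (2 / p) * M ^+ 2).
  rewrite -hM2 -powRM ?(ltW k0) ?(ltW b0) // -powR_div //.
  by apply: powR_le; [rewrite divr_ge0 // ltW | exact: T0 | exact: hT].
have kq : 0 < k `^ (2 / p) by apply: powR_gt0.
apply: le_trans (_ : Q + k * c ^+ 2 <= _); first by rewrite lerD2l.
apply: (le_trans H1).
apply: le_trans (_ : k * M ^+ 2 * (C ^+ 2 * T `^ (2 / p)) <= _).
  by rewrite ler_wpM2l // mulr_ge0 // ltW.
apply: le_trans (_ : k * M ^+ 2 * (C ^+ 2 * ((S1 + sg) `^ (2 / p) / (k `^ (2 / p) * M ^+ 2))) <= _).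
  apply: ler_wpM2l; first by rewrite mulr_ge0 // ltW.
  by apply: ler_wpM2l; [exact: sqr_ge0 | exact: Tq].
rewrite powRB; last by apply/implyP => _; rewrite gt_eqF.
rewrite powRr1; last exact: ltW k0.
rewrite le_eqVlt; apply/orP; left; apply/eqP; field.
by rewrite !gt_eqF.
Qed.
End S2.

Lemma nA {k : nat} : (0 < k)%N -> (k.+1 <= 2 * k)%N. Proof. lia. Qed.
Lemma nB (k : nat) : (2 * k <= 3 * k)%N. Proof. lia. Qed.
Lemma nC {k : nat} : (0 < k)%N -> (k.+1 <= 3 * k)%N. Proof. lia. Qed.
Lemma nD {k : nat} : (0 < k)%N -> (0 < 2 * k)%N. Proof. lia. Qed.
Lemma cnt1 (k : nat) : ((3 * k).+1 - (2 * k).+1)%N = k. Proof. lia. Qed.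
Lemma cnt2 (k : nat) : (k.+1 - 1)%N = k. Proof. lia. Qed.
Lemma cnt3 (k : nat) : ((2 * k).+1 - k.+1)%N = k. Proof. lia. Qed.
Lemma nE {k : nat} : (0 < k)%N -> (k.+1 <= (2 * k).+1)%N. Proof. lia. Qed.
Lemma nF (k : nat) : ((2 * k).+1 <= (3 * k).+1)%N. Proof. lia. Qed.

Lemma sum_const_k (R : realType) (m n : nat) (x : R) :
  \sum_(m <= i < n) x = (n - m)%N%:R * x.
Proof. by rewrite sumr_const_nat mulr_natl. Qed.

Theorem corollary5 (R : realType) (p : R) (k : nat) (u : nat -> R) :
  0 < p < 1 -> (0 < k)%N ->
  (forall i j, (1 <= i)%N -> (i <= j)%N -> (j <= 3 * k)%N -> u j <= u i) ->
  (forall i, (1 <= i)%N -> (i <= 3 * k)%N -> 0 <= u i) ->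
  (\sum_(k.+1 <= i < (3 * k).+1) u i ^+ 2) `^ (2^-1)
  <= C1 p * (k%:R) `^ (2^-1 - p^-1)
     * (\sum_(1 <= i < (2 * k).+1) u i `^ p) `^ (p^-1).
Proof.
move=> /andP [p0 p1] k0 hdec hnn.
have [hA hB] := @C1_ge R p p0 p1.
have B0 : 0 <= Bc p by apply: powR_ge0.
have C0 : 0 <= C1 p := le_trans B0 hB.
set LS := \sum_(k.+1 <= i < (3 * k).+1) u i ^+ 2.
set S := \sum_(1 <= i < (2 * k).+1) u i `^ p.
have S0 : 0 <= S.
  by rewrite /S; apply: sumr_ge0 => i _; apply: powR_ge0.
have LS0 : 0 <= LS by rewrite /LS; apply: sumr_ge0 => i _; apply: sqr_ge0.
suff main : LS <= C1 p ^+ 2 * k%:R `^ (1 - 2 / p) * S `^ (2 / p).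
  apply: le_trans (@powR_le _ (2^-1) _ _ _ LS0 main) _; first lra.
  rewrite powRM; last 2 first.
  - by rewrite mulr_ge0 // ?sqr_ge0 // powR_ge0.
  - exact: powR_ge0.
  rewrite powRM; last 2 first.
  - exact: sqr_ge0.
  - exact: powR_ge0.
  rewrite powR12_sqrt ?sqr_ge0 // sqrtr_sqr ger0_norm //.
  rewrite -!powRrM.
  have e1 : (1 - 2 / p) * 2^-1 = 2^-1 - p^-1 by field; rewrite gt_eqF.
  have e2 : 2 / p * 2^-1 = p^-1 by field; rewrite gt_eqF.
  by rewrite e1 e2.
set M := u k.+1; set c := u (2 * k).
have hk1 : (1 <= k)%N by [].
have M0 : 0 <= M := hnn _ (ltn0Sn k) (nC k0).
have c0 : 0 <= c := hnn _ (nD k0) (nB k).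
have cM : c <= M := hdec _ _ (ltn0Sn k) (nA k0) (nB k).
have rng1 : forall i, (k.+1 <= i < (3 * k).+1)%N -> 0 <= u i /\ u i <= M.
  move=> i /andP [hi1 hi2]; rewrite ltnS in hi2; split.
  - exact: hnn _ (leq_trans (ltn0Sn k) hi1) hi2.
  - exact: hdec _ _ (ltn0Sn k) hi1 hi2.
have [M00|Mpos] := eqVneq M 0.
  have -> : LS = 0.
    rewrite /LS big_nat_cond big1 // => i /andP [hi _].
    have [h1 h2] := rng1 i hi.
    have -> : u i = 0 by apply/eqP; rewrite eq_le h1 andbT -M00.
    by rewrite expr0n.
  by rewrite mulr_ge0 // ?powR_ge0 // mulr_ge0 // ?sqr_ge0 // powR_ge0.
have Mp : 0 < M by rewrite lt_neqAle eq_sym Mpos M0.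
set Q := \sum_(k.+1 <= i < (2 * k).+1) u i ^+ 2.
set T3 := \sum_((2 * k).+1 <= i < (3 * k).+1) u i ^+ 2.
set sg := \sum_(k.+1 <= i < (2 * k).+1) u i `^ p.
set S1 := \sum_(1 <= i < k.+1) u i `^ p.
have eLS : LS = Q + T3.
  by rewrite /LS /Q /T3 (@big_cat_nat _ _ _ (2 * k).+1 _ _ _ _ (nE k0) (nF k)).
have eS : S = S1 + sg.
  by rewrite /S /S1 /sg (@big_cat_nat _ _ _ k.+1 _ _ _ _ (ltn0Sn k) (nE k0)).
have mid : forall i, (k.+1 <= i < (2 * k).+1)%N -> c <= u i /\ u i <= M.
  move=> i /andP [hi1 hi2]; rewrite ltnS in hi2; split.
  - exact: hdec _ _ (leq_trans (ltn0Sn k) hi1) hi2 (nB k).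
  - exact: hdec _ _ (ltn0Sn k) hi1 (leq_trans hi2 (nB k)).
have kR : 1 <= (k%:R : R) by rewrite ler1n.
rewrite eLS eS.
apply: (@final_scalar R p k%:R M c Q T3 sg S1 (C1 p)) => //.
-
  apply: le_trans (_ : \sum_((2 * k).+1 <= i < (3 * k).+1) c ^+ 2 <= _).
    apply: ler_sum_nat => i /andP [hi1 hi2]; rewrite ltnS in hi2.
    have ui0 : 0 <= u i := hnn _ (leq_trans (ltn0Sn _) hi1) hi2.
    have uic : u i <= c := hdec _ _ (nD k0) (ltnW hi1) hi2.
    by rewrite !expr2; apply: ler_pM.
  rewrite sum_const_k.
  rewrite cnt1.
  by [].
-
  rewrite /S1; apply: le_trans (_ : \sum_(1 <= i < k.+1) M `^ p <= _).
    rewrite sum_const_k.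
    rewrite cnt2.
    by [].
  apply: ler_sum_nat => i /andP [hi1 hi2].
  apply: powR_le; first exact: ltW.
  + exact: M0.
  + exact: hdec _ _ hi1 (ltnW hi2) (nC k0).
-
  rewrite /sg; apply: le_trans (_ : \sum_(k.+1 <= i < (2 * k).+1) c `^ p <= _).
    rewrite sum_const_k.
    rewrite cnt3.
    by [].
  apply: ler_sum_nat => i hi.
  have [h1 h2] := mid i hi.
  by apply: powR_le => //; exact: ltW.
-
  rewrite /sg; apply: (@le_trans _ _ (\sum_(k.+1 <= i < (2 * k).+1) M `^ p)).
    apply: ler_sum_nat => i hi.
    have [h1 h2] := mid i hi.
    apply: powR_le => //; first exact: ltW.
    exact: le_trans h1.
  rewrite sum_const_k.
  rewrite cnt3.
  by [].
-
  have q1 : 1 <= 2 / p by rewrite ler_pdivlMr // mul1r; lra.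
  have per : forall i, (k.+1 <= i < (2 * k).+1)%N ->
      (M `^ p - c `^ p) * u i ^+ 2 <=
      (M `^ p - c `^ p) * c ^+ 2 + (M ^+ 2 - c ^+ 2) * (u i `^ p - c `^ p).
    move=> i hi; have [h1 h2] := mid i hi.
    have ui0 : 0 <= u i := le_trans c0 h1.
    have := @chord R (2 / p) (c `^ p) (M `^ p) (u i `^ p) q1 (powR_ge0 _ _)
      (@powR_le R p _ _ (ltW p0) c0 h1) (@powR_le R p _ _ (ltW p0) ui0 h2).
    by rewrite (@powpq R p c p0 c0) (@powpq R p M p0 M0) (@powpq R p (u i) p0 ui0).
  rewrite /Q mulr_sumr; apply: le_trans (ler_sum_nat per) _.
  rewrite big_split /= sum_const_k -mulr_sumr sumrB sum_const_k.
  rewrite cnt3.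
  by [].
-
  rewrite /Q; apply: (@le_trans _ _ (\sum_(k.+1 <= i < (2 * k).+1) M ^+ 2)).
    apply: ler_sum_nat => i hi.
    have [h1 h2] := mid i hi.
    have ui0 : 0 <= u i := le_trans c0 h1.
    by rewrite !expr2; apply: ler_pM.
  rewrite sum_const_k.
  rewrite cnt3.
  by [].
Qed.
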